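(* Consider the DS-PSRL algorithm run on a parametrized MDP with scalar parameter satisfying the Lipschitz condition: there is $C$ with $\|P(\cdot\mid x,a,\theta)-P(\cdot\mid x,a,\theta')\|_1\le C|\theta-\theta'|$ for all $x,a$ and $\theta,\theta'\in\Theta\subseteq\mathbb{R}$, and whose differential value functions satisfy $h(x,\theta)\in[0,H]$. Let $m$ be the number of episodes up to time $T$, $M_j$ the number of steps in the $j$-th episode, and $\widetilde\theta_j$ the parameter sampled for episode $j$. Then \[ \mathbb{E}\Big[\sum_{t=1}^T\Delta_t\Big]\le CH\sqrt{T\,\mathbb{E}\Big[\sum_{j=1}^m M_j|\theta_*-\widetilde\theta_j|^2\Big]}. \]
   Context: Setting: parametrized MDP with state space $\mathcal{X}$, action space $\mathcal{A}$, known loss, known transition kernels $P(\cdot\mid x,a,\theta)$, unknown true parameter $\theta_*$ drawn from a known prior. $h(\cdot,\theta)$ is the differential value function of the average-cost Bellman optimality equation for parameter $\theta$. DS-PSRL: set $L=1$; at each $t$, if $t=L$ sample $\widetilde\theta_t$ from the current posterior and set $L\leftarrow2L$, else keep $\widetilde\theta_t=\widetilde\theta_{t-1}$; play the optimal action $a_t$ for parameter $\widetilde\theta_t$ at state $x_t$; observe $x_{t+1}\sim P(\cdot\mid x_t,a_t,\theta_* )$; update the posterior. An episode is a maximal run of steps with the same sampled parameter. With $h_t=h(\cdot,\widetilde\theta_t)$, define $\Delta_t=\int_{\mathcal{X}}\big(P(x\mid x_t,a_t,\theta_* )-P(x\mid x_t,a_t,\widetilde\theta_t)\big)h_t(x)\,dx$.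 *)

(* Defs.v *)
From HB Require Import structures.
From mathcomp Require Import all_boot all_order all_algebra.
From mathcomp Require Import all_classical all_reals all_analysis.
Set Implicit Arguments. Unset Strict Implicit. Unset Printing Implicit Defensive.
Import Order.TTheory GRing.Theory Num.Theory.
Local Open Scope ring_scope.

(* DS-PSRL doubling schedule: sampling times are t = 1, 2, 4, 8, ...
   The episode containing time t >= 1 is j = trunc_log 2 t, i.e. the
   episode j consists of the times t with 2^j <= t < 2^(j+1). *)
Definition episode_of (t : nat) : nat := trunc_log 2 t.

Definition num_episodes (T : nat) : nat := (trunc_log 2 T).+1.

Definition episode_length (T j : nat) : nat :=
  (\sum_(1 <= t < T.+1) (episode_of t == j))%N.

(* Delta_t = \int (P(x | x_t,a_t,theta_* ) - P(x | x_t,a_t,theta~_t)) h(x,theta~_t) dx,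
   P x a th : X -> R is the density of the next state w.r.t. the reference
   measure mu ("dx"). *)
Definition Delta {d} {X : measurableType d} {R : realType} {A : Type}
  (mu : {measure set X -> \bar R}) (P : X -> A -> R -> X -> R)
  (h : X -> R -> R) (xt : X) (at_ : A) (th_star th : R) : R :=
  Rintegral mu setT (fun y => (P xt at_ th_star y - P xt at_ th y) * h y th).

(* Main.v *)
Require Import Defs.
From HB Require Import structures.
From mathcomp Require Import all_boot all_order all_algebra.
From mathcomp Require Import all_classical all_reals all_analysis.
From mathcomp Require Import ring lra measurable_realfun.
Import Order.TTheory GRing.Theory Num.Theory.
Local Open Scope ring_scope.


Lemma regroup (R : realType) T (f : nat -> R) :
  \sum_(j < num_episodes T) (episode_length T j)%:R * f j =
  \sum_(1 <= t < T.+1) f (episode_of t).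
Proof.
rewrite /episode_length.
under eq_bigr => j _ do rewrite natr_sum mulr_suml.
rewrite exchange_big /=.
rewrite big_nat_cond [RHS]big_nat_cond; apply: eq_bigr => t /andP[/andP[t1 tT] _].
have lt : (episode_of t < num_episodes T)%N.
  by rewrite /num_episodes ltnS /episode_of leq_trunc_log// -ltnS.
rewrite (bigD1 (Ordinal lt)) //= eqxx mul1r big1 ?addr0 // => j /negbTE jn.
suff -> : (episode_of t == j) = false by rewrite mul0r.
by apply/negbTE/eqP => E; move: jn; rewrite -val_eqE /= E eqxx.
Qed.

Lemma abs_fine_le (R : realType) (e : \bar R) : ((`|fine e|)%:E <= `|e|)%E.
Proof. by case: e => [r| |] //=; rewrite normr0 ?abse0 ?lee_fin ?leey. Qed.

Lemma delta_bound (R : realType) (d : measure_display) (X : measurableType d) (A : Type)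
  (mu : {measure set X -> \bar R}) (Theta : set R)
  (P : X -> A -> R -> X -> R) (h : X -> R -> R) (C H : R) x0 a0 th1 th2 :
  Theta th1 -> Theta th2 -> 0 <= H ->
  (forall x0 a0 th, Theta th -> measurable_fun setT (P x0 a0 th)) ->
  (forall x0 a0 th th', Theta th -> Theta th' ->
     (\int[mu]_y `|P x0 a0 th y - P x0 a0 th' y|%:E <= (C * `|th - th'|)%:E)%E) ->
  (forall th, Theta th -> measurable_fun setT (h^~ th)) ->
  (forall y th, Theta th -> 0 <= h y th <= H) ->
  `|Delta mu P h x0 a0 th1 th2| <= C * H * `|th1 - th2|.
Proof.
move=> T1 T2 H0 mP Lip mh hb.
rewrite -lee_fin /Delta /Rintegral. apply: le_trans; first exact: abs_fine_le.
have mg : measurable_fun setT (fun y => P x0 a0 th1 y - P x0 a0 th2 y).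
  exact: measurable_realfun.measurable_funB (mP _ _ _ T1) (mP _ _ _ T2).
have mf : measurable_fun setT (fun y => (P x0 a0 th1 y - P x0 a0 th2 y) * h y th2).
  exact: measurable_realfun.measurable_funM mg (mh _ T2).
apply: (le_trans (le_abse_integral _ _ _)) => //=.
  exact/measurable_realfun.measurable_EFinP.
apply: (@le_trans _ _ (\int[mu]_y (H%:E * (`|P x0 a0 th1 y - P x0 a0 th2 y|)%:E))%E).
  apply: ge0_le_integral => //=.
  - exact/measurable_realfun.measurable_EFinP/measurableT_comp.
  - by apply/measurable_realfun.measurable_EFinP; apply: measurable_realfun.measurable_funM => //; exact: measurableT_comp.
  - move=> y _; rewrite /= -EFinM lee_fin normrM mulrC ler_wpM2r //.
    by have /andP[h0 hH] := hb y _ T2; rewrite ger0_norm.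
rewrite ge0_integralZl_EFin //=; last exact/measurable_realfun.measurable_EFinP/measurableT_comp.
rewrite mulrAC EFinM (muleC _ H%:E); apply: lee_wpmul2l; first by rewrite lee_fin.
exact: Lip.
Qed.

Lemma E_le (R : realType) (dO : measure_display) (Omega : measurableType dO)
  (Pr : probability Omega R) (f g : Omega -> R) :
  measurable_fun setT f -> measurable_fun setT g ->
  (forall w, 0 <= g w) -> (forall w, f w <= g w) ->
  ('E_Pr[f] <= \int[Pr]_w (g w)%:E)%E.
Proof.
move=> mf mg g0 fg; rewrite expectation.unlock integralE.
have mfE : measurable_fun setT (EFin \o f) by exact/measurable_realfun.measurable_EFinP.
rewrite -[X in (_ <= X)%E]sube0; apply: leeB.
  apply: ge0_le_integral => //.
  - exact: measurable_funepos.
  - exact/measurable_EFinP.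
  - move=> w _; rewrite funeposE /= ge_max !lee_fin fg g0 //.
apply: integral_ge0 => w _; exact: funeneg_ge0.
Qed.

Lemma amgm (R : realType) (y c : R) : 0 < c -> `|y| <= y ^+ 2 / (2 * c) + c / 2.
Proof.
move=> c0; have u0 := normr_ge0 y.
rewrite -real_normK ?num_real //.
have E : `|y| ^+ 2 / (2 * c) + c / 2 - `|y| = (`|y| - c) ^+ 2 / (2 * c).
  by field; lra.
have : 0 <= (`|y| - c) ^+ 2 / (2 * c) by rewrite divr_ge0 ?sqr_ge0 //; lra.
rewrite -E; lra.
Qed.

Lemma ereal_le0 (R : realType) (e : \bar R) : (forall c : R, 0 < c -> (e <= c%:E)%E) -> (e <= 0)%E.
Proof.
case: e => [r| |] //= H.
- rewrite lee_fin; rewrite leNgt; apply/negP => r0.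
  have := H (r / 2); rewrite lee_fin; lra.
- by have := H 1 ltr01.
Qed.

Lemma neg_lip0 (R : realType) (K u v : R) : K < 0 -> 0 <= u -> 0 <= v -> v <= K * u -> u = 0.
Proof. move=> *; nra. Qed.

Lemma sum_amgm (R : realType) (T : nat) (c : R) (f : nat -> R) : 0 < c ->
  \sum_(1 <= t < T.+1) `|f t| <= (\sum_(1 <= t < T.+1) f t ^+ 2) / (2 * c) + T%:R * c / 2.
Proof.
move=> c0.
apply: le_trans (ler_sum _ (fun t _ => amgm _ (f t) _ c0)) _.
rewrite big_split /= -mulr_suml sumr_const_nat subn1 /=.
by rewrite -[_ *+ T]mulr_natl mulrA.
Qed.

Lemma alg1 (R : realType) (K q c t : R) :
  K * (q / (2 * c) + t * c / 2) = K / (2 * c) * q + K * t * c / 2.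
Proof. ring. Qed.

Lemma alg_final (R : realType) (K r t : R) : 0 < t -> 0 < r ->
  K / (2 * (Num.sqrt (t * r) / t)) * r + K * t * (Num.sqrt (t * r) / t) / 2 =
  K * Num.sqrt (t * r).
Proof.
move=> t0 r0; set s := Num.sqrt (t * r).
have s0 : 0 < s by rewrite sqrtr_gt0 mulr_gt0.
have rE : r = s ^+ 2 / t.
  by rewrite sqr_sqrtr ?mulr_ge0 ?ltW //; field; rewrite gt_eqF.
rewrite [in X in X + _ = _]rE; field.
by rewrite !gt_eqF.
Qed.

Lemma alg_small (R : realType) (m eps : R) : 0 <= m -> 0 < eps ->
  m * (eps / (m + 1)) / 2 <= eps.
Proof.
move=> m0 e0.
have h1 : 0 < m + 1 by lra.
have : m * (eps / (m + 1)) <= eps.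
  by rewrite mulrA ler_pdivrMr // mulrC ler_wpM2l //; lra.
lra.
Qed.

Lemma pos_small (R : realType) (m eps : R) : 0 <= m -> 0 < eps -> 0 < eps / (m + 1).
Proof. move=> m0 e0; apply: divr_gt0 => //; lra. Qed.
Theorem lemma3
  (R : realType) (d : measure_display) (X : measurableType d) (A : Type)
  (mu : {measure set X -> \bar R})
  (Theta : set R)
  (P : X -> A -> R -> X -> R)            (* transition densities P(y | x,a,theta) *)
  (loss : X -> A -> R)                   (* known loss *)
  (J : R -> R) (h : X -> R -> R)         (* optimal average cost, differential value fn *)
  (pi : X -> R -> A)                     (* optimal action for parameter theta at state x *)
  (C H : R)
  (dO : measure_display) (Omega : measurableType dO) (Pr : probability Omega R)
  (th_star : Omega -> R)                 (* true parameter (random, drawn from the prior) *)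
  (th_tilde : nat -> Omega -> R)         (* parameter used at time t *)
  (x : nat -> Omega -> X) (a : nat -> Omega -> A)   (* states and actions *)
  (T : nat) :
  (* transition kernels: probability densities w.r.t. mu *)
  (forall x0 a0 th, Theta th ->
     measurable_fun setT (P x0 a0 th) /\ (forall y, 0 <= P x0 a0 th y) /\
     (\int[mu]_y (P x0 a0 th y)%:E = 1)%E) ->
  (* Lipschitz condition in L1 *)
  (forall x0 a0 th th', Theta th -> Theta th' ->
     (\int[mu]_y `|P x0 a0 th y - P x0 a0 th' y|%:E <= (C * `|th - th'|)%:E)%E) ->
  (* h(., theta) is the differential value function (average-cost Bellman
     optimality equation), pi x theta an optimal action, and h in [0, H] *)
  (forall th, Theta th -> measurable_fun setT (h^~ th)) ->
  (forall y th, Theta th -> 0 <= h y th <= H) ->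
  (forall th x0, Theta th ->
     J th + h x0 th = loss x0 (pi x0 th) + Rintegral mu setT (fun y => P x0 (pi x0 th) th y * h y th)
     /\ forall a0, J th + h x0 th <= loss x0 a0 + Rintegral mu setT (fun y => P x0 a0 th y * h y th)) ->
  (* the random quantities generated by DS-PSRL *)
  measurable_fun setT th_star ->
  (forall t, measurable_fun setT (th_tilde t)) ->
  (forall w, Theta (th_star w)) ->
  (forall t w, (1 <= t)%N -> Theta (th_tilde t w)) ->
  (* doubling schedule: resample at t = 1,2,4,..., otherwise keep *)
  (forall t w, (1 <= t)%N -> th_tilde t w = th_tilde (2 ^ episode_of t)%N w) ->
  (* play the optimal action for the sampled parameter *)
  (forall t w, (1 <= t)%N -> a t w = pi (x t w) (th_tilde t w)) ->
  measurable_fun setT (fun w => \sum_(1 <= t < T.+1)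
                         Delta mu P h (x t w) (a t w) (th_star w) (th_tilde t w)) ->
  ('E_Pr[fun w => (\sum_(1 <= t < T.+1)
                    Delta mu P h (x t w) (a t w) (th_star w) (th_tilde t w))%R]
   <= (C * H)%:E *
      sqrte ((T%:R)%:E *
        'E_Pr[fun w => (\sum_(j < num_episodes T)
                 (episode_length T j)%:R * (th_star w - th_tilde (2 ^ j)%N w) ^+ 2)%R]))%E.
Proof.
move=> hP Lip mh hb _ mstar mtil Tstar Ttil sched _ mS.
have mP : forall x0 a0 th, Theta th -> measurable_fun setT (P x0 a0 th).
  by move=> x0 a0 th /(hP x0 a0 th) [].
pose Q := fun w => \sum_(j < num_episodes T)
                 (episode_length T j)%:R * (th_star w - th_tilde (2 ^ j)%N w) ^+ 2.
rewrite -[X in sqrte (_ * X)]/('E_Pr[Q])%E.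
have QE : forall w, Q w = \sum_(1 <= t < T.+1) (th_star w - th_tilde t w) ^+ 2.
  move=> w; rewrite /Q (regroup _ T (fun j => (th_star w - th_tilde (2 ^ j)%N w) ^+ 2)).
  rewrite big_nat_cond [RHS]big_nat_cond; apply: eq_bigr => t /andP[/andP[t1 _] _].
  by rewrite -sched.
have Q0 : forall w, 0 <= Q w.
  by move=> w; rewrite QE; apply: sumr_ge0 => *; exact: sqr_ge0.
have mQ : measurable_fun setT Q.
  apply: measurable_sum => j; apply: measurable_funM => //.
  by apply: measurable_funX; apply: measurable_funB.
have q0 : (0 <= 'E_Pr[Q])%E.
  by rewrite expectation.unlock; apply: integral_ge0 => w _; rewrite lee_fin.
have [T0|Tpos] := eqVneq T 0%N.
  subst T; rewrite mul0e sqrte0 mule0 expectation.unlock.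
  by rewrite integral0_eq // => w _; rewrite big_geq.
have Tp : (0 < T)%N by rewrite lt0n.
have H0 : forall w : Omega, 0 <= H.
  move=> w; have /andP[h0 hH] := hb (x 1%N w) _ (Tstar w); exact: le_trans hH.
set K := C * H.
have Db : forall w t, (1 <= t)%N ->
    `|Delta mu P h (x t w) (a t w) (th_star w) (th_tilde t w)| <= K * `|th_star w - th_tilde t w|.
  move=> w t t1.
  exact: (delta_bound R d X A mu Theta P h C H (x t w) (a t w) (th_star w) (th_tilde t w)
            (Tstar w) (Ttil t w t1) (H0 w) mP Lip mh hb).
have Sb : forall w, \sum_(1 <= t < T.+1) Delta mu P h (x t w) (a t w) (th_star w) (th_tilde t w)
                    <= K * \sum_(1 <= t < T.+1) `|th_star w - th_tilde t w|.
  move=> w; rewrite mulr_sumr big_nat_cond [X in _ <= X]big_nat_cond.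
  apply: ler_sum => t /andP[/andP[t1 _] _].
  exact: le_trans (ler_norm _) (Db w t t1).
have [Kneg|K0] := ltP K 0.
  have d0 : forall w t, (1 <= t)%N -> th_star w - th_tilde t w = 0.
    move=> w t t1; have := Db w t t1.
    have := normr_ge0 (Delta mu P h (x t w) (a t w) (th_star w) (th_tilde t w)).
    have := normr_ge0 (th_star w - th_tilde t w).
    move=> u0 D0 DK; apply/normr0_eq0; exact: neg_lip0 Kneg u0 D0 DK.
  have Qz : forall w, Q w = 0.
    move=> w; rewrite QE big_nat_cond big1 // => t /andP[/andP[t1 _] _].
    by rewrite d0 // expr0n.
  have -> : ('E_Pr[Q] = 0)%E.
    by rewrite expectation.unlock integral0_eq // => w _; rewrite Qz.
  rewrite mule0 sqrte0 mule0.
  apply: le_trans; first apply: (E_le _ _ _ Pr _ (fun _ => 0)) => //.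
  - move=> w; apply: le_trans (Sb w) _; apply: mulr_le0_ge0; first exact: ltW.
    by apply: sumr_ge0 => *.
  - by rewrite integral0_eq.
have key : forall c : R, 0 < c ->
   ('E_Pr[fun w => (\sum_(1 <= t < T.+1) Delta mu P h (x t w) (a t w) (th_star w) (th_tilde t w))%R]
     <= (K / (2 * c))%:E * 'E_Pr[Q] + (K * T%:R * c / 2)%:E)%E.
  move=> c c0.
  have a0 : 0 <= K / (2 * c) by rewrite divr_ge0 // ltW // mulr_gt0.
  have b0 : 0 <= K * T%:R * c / 2.
    by apply: divr_ge0 => //; apply: mulr_ge0; [apply: mulr_ge0 => // | exact: ltW].
  apply: le_trans; first apply: (E_le _ _ _ Pr _ (fun w => K / (2 * c) * Q w + K * T%:R * c / 2)) => //.
  - apply: measurable_funD => //; apply: measurable_funM => //.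
  - by move=> w; rewrite addr_ge0 // mulr_ge0.
  - move=> w; apply: le_trans (Sb w) _.
    rewrite -alg1 ler_wpM2l // QE.
    exact: sum_amgm.
  rewrite (eq_integral (fun w => (K / (2 * c))%:E * (Q w)%:E + (K * T%:R * c / 2)%:E)%E); last first.
    by move=> w _; rewrite EFinD EFinM.
  rewrite ge0_integralD //; last 2 first.
  - by move=> w _; rewrite -EFinM lee_fin mulr_ge0.
  - by apply: measurable_funeM; apply/measurable_EFinP.
  rewrite ge0_integralZl_EFin //; last 2 first.
  - by move=> w _; rewrite lee_fin.
  - exact/measurable_EFinP.
  have -> : (\int[Pr]_w (K * T%:R * c / 2)%:E = 'E_Pr[cst (K * T%:R * c / 2)%R])%E.
    by rewrite expectation.unlock.
  by rewrite expectation_cst expectation.unlock.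
have m0 : 0 <= K * T%:R by rewrite mulr_ge0.
have Tr0 : 0 < (T%:R : R) by rewrite ltr0n.
move: q0 key; case E: ('E_Pr[Q])%E => [r| |] // r0 key.
  rewrite lee_fin in r0.
  rewrite -EFinM /=.
  have [r00|rpos] := eqVneq r 0.
    subst r; rewrite mulr0 sqrtr0 mulr0.
    apply: ereal_le0 => eps e0.
    apply: le_trans; first exact: (key (eps / (K * T%:R + 1)) (pos_small _ _ _ m0 e0)).
    by rewrite mule0 add0e lee_fin alg_small.
  have rp : 0 < r by rewrite lt_neqAle eq_sym rpos r0.
  have c0 : 0 < Num.sqrt (T%:R * r) / T%:R by rewrite divr_gt0 // sqrtr_gt0 mulr_gt0.
  apply: le_trans; first exact: (key _ c0).
  by rewrite -EFinM -EFinD lee_fin alg_final.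
have [K00|Kpos] := eqVneq K 0.
  have := key 1 ltr01; rewrite K00 !mul0r mul0e adde0 => k1.
  by rewrite mul0e.
have Kp : 0 < K by rewrite lt_neqAle eq_sym Kpos K0.
rewrite gt0_muley ?lte_fin //= gt0_muley ?lte_fin //.
exact: leey.

Qed.
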